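(* Every consistent piece-wise quadratic function $g:\mathbb{R}\to\mathbb{R}$ has a non-decreasing indexing function $I_g$.
   Context: A continuous $g$ is piece-wise quadratic with $N$ pieces if there exist $-\infty=\tau_0<\tau_1<\dots<\tau_N=+\infty$ and quadratic $p_1,\dots,p_N$ with $g=p_k$ on $[\tau_{k-1},\tau_k]$ and $p_k\ne p_{k+1}$ as functions; it is consistent if every $p_k$ is strongly convex and $g=\min_kp_k$ on $\mathbb{R}$. For such $g$ with strongly convex pieces, the indexing function is $I_g(\beta)=\min\{k:\ \exists\,\alpha^\star\in\arg\max_\alpha\{\beta\alpha-g(\alpha)\}\text{ with }\tau_{k-1}\le\alpha^\star\le\tau_k\}$. *)

(* Defs.v *)
From Stdlib Require Import Reals Lra Lia.
Open Scope R_scope.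

Definition quad (a b c : R) (x : R) : R := a * x ^ 2 + b * x + c.

(* Pieces are indexed k = 1..N; breakpoints tau 1, ..., tau (N-1) are finite,
   and tau_0 = -oo, tau_N = +oo are encoded by the conditions below. *)

Definition in_piece (N : nat) (tau : nat -> R) (k : nat) (x : R) : Prop :=
  (k = 1%nat \/ tau (k - 1)%nat <= x) /\ (k = N \/ x <= tau k).

Definition piecewise_quadratic (g : R -> R) (N : nat) (tau : nat -> R)
    (a b c : nat -> R) : Prop :=
  (1 <= N)%nat /\
  (forall x, continuity_pt g x) /\
  (forall k, (1 <= k)%nat -> (k + 1 < N)%nat -> tau k < tau (k + 1)%nat) /\
  (forall k x, (1 <= k <= N)%nat -> in_piece N tau k x ->
     g x = quad (a k) (b k) (c k) x) /\
  (forall k, (1 <= k)%nat -> (k < N)%nat ->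
     exists x, quad (a k) (b k) (c k) x <> quad (a (k + 1)%nat) (b (k + 1)%nat) (c (k + 1)%nat) x).

Definition consistent (g : R -> R) (N : nat) (a b c : nat -> R) : Prop :=
  (forall k, (1 <= k <= N)%nat -> 0 < a k) /\
  (forall x,
     (forall k, (1 <= k <= N)%nat -> g x <= quad (a k) (b k) (c k) x) /\
     (exists k, (1 <= k <= N)%nat /\ g x = quad (a k) (b k) (c k) x)).

Definition is_argmax (g : R -> R) (beta alpha : R) : Prop :=
  forall x, beta * x - g x <= beta * alpha - g alpha.

Definition index_set (g : R -> R) (N : nat) (tau : nat -> R) (beta : R) (k : nat) : Prop :=
  (1 <= k <= N)%nat /\ exists alpha, is_argmax g beta alpha /\ in_piece N tau k alpha.

Definition indexing (g : R -> R) (N : nat) (tau : nat -> R) (beta : R) (k : nat) : Prop :=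
  index_set g N tau beta k /\ (forall j, index_set g N tau beta j -> (k <= j)%nat).

(* Main.v *)
Require Import Defs.
From Stdlib Require Import Reals.
From Stdlib Require Import Lra Lia Psatz Classical Arith.
Open Scope R_scope.

Lemma min_nat_ex (P : nat -> Prop) : (exists n, P n) -> exists n, P n /\ forall m, P m -> (n <= m)%nat.
Proof.
  intros [n Hn]. revert Hn. induction n as [n IH] using lt_wf_ind. intros Hn.
  destruct (classic (exists m, (m < n)%nat /\ P m)) as [[m [Hm Pm]]|Hno].
  - exact (IH m Hm Pm).
  - exists n. split; auto. intros m Pm. destruct (le_lt_dec n m); auto.
    exfalso; apply Hno; eauto.
Qed.

Lemma quad_neg (a p q : R) : 0 < a -> exists M, 0 < M /\ forall x, M <= Rabs x -> - a * x^2 + p * x + q <= 0.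
Proof.
  intros Ha. exists ((Rabs p + Rabs q)/a + 1). split.
  - assert (0 <= (Rabs p + Rabs q)/a). { unfold Rdiv; apply Rmult_le_pos; [pose proof (Rabs_pos p); pose proof (Rabs_pos q); lra|left; apply Rinv_0_lt_compat; lra]. } lra.
  - intros x Hx.
    set (M := (Rabs p + Rabs q)/a + 1) in *.
    assert (HaM : a * M = Rabs p + Rabs q + a). { unfold M. field. lra. }
    assert (Hx2 : x^2 = Rabs x * Rabs x). { destruct (Rcase_abs x); [rewrite Rabs_left|rewrite Rabs_right]; auto; ring. }
    assert (H1 : a * M * Rabs x <= a * x^2). { rewrite Hx2, <- Rmult_assoc. apply Rmult_le_compat_r; [apply Rabs_pos|]. apply Rmult_le_compat_l; lra. }
    assert (px : p * x <= Rabs p * Rabs x). { rewrite <- Rabs_mult. apply Rle_abs. }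
    assert (q <= Rabs q) by apply Rle_abs.
    assert (1 <= Rabs x). { assert (0 <= (Rabs p + Rabs q)/a). { unfold Rdiv; apply Rmult_le_pos; [pose proof (Rabs_pos p); pose proof (Rabs_pos q); lra|left; apply Rinv_0_lt_compat; lra]. } unfold M in Hx. lra. }
    rewrite HaM in H1. pose proof (Rabs_pos p). pose proof (Rabs_pos q). nra.
Qed.

Lemma tau_mono (N : nat) (tau : nat -> R) :
  (forall k, (1 <= k)%nat -> (k + 1 < N)%nat -> tau k < tau (k + 1)%nat) ->
  forall d i, (1 <= i)%nat -> (i + d <= N - 1)%nat -> tau i <= tau (i + d)%nat.
Proof.
  intros Hs d. induction d as [|d IH]; intros i Hi Hd.
  - rewrite Nat.add_0_r. lra.
  - replace (i + S d)%nat with (i + d + 1)%nat by lia.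
    assert (tau i <= tau (i+d)%nat) by (apply IH; lia).
    assert (tau (i+d)%nat < tau (i+d+1)%nat) by (apply Hs; lia). lra.
Qed.

Lemma cover (N : nat) (tau : nat -> R) x : (1 <= N)%nat ->
  exists k, (1 <= k <= N)%nat /\ in_piece N tau k x.
Proof.
  intros HN.
  assert (H : forall m n, (n + m = N)%nat -> (1 <= n)%nat -> (n = 1%nat \/ tau (n-1)%nat <= x) ->
     exists k, (1 <= k <= N)%nat /\ in_piece N tau k x).
  { induction m as [|m IH]; intros n Hnm Hn Hl.
    - exists n. split; [lia|]. split; auto. left; lia.
    - destruct (Rle_dec x (tau n)) as [Hle|Hgt].
      + exists n. split; [lia|]. split; auto.
      + apply (IH (S n)); try lia. right. replace (S n - 1)%nat with n by lia. lra. }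
  apply (H (N-1)%nat 1%nat); auto; lia.
Qed.

Theorem lemma5 (g : R -> R) (N : nat) (tau : nat -> R) (a b c : nat -> R) :
  piecewise_quadratic g N tau a b c ->
  consistent g N a b c ->
  (forall beta, exists k, indexing g N tau beta k) /\
  (forall beta1 beta2 k1 k2, beta1 <= beta2 ->
     indexing g N tau beta1 k1 -> indexing g N tau beta2 k2 -> (k1 <= k2)%nat).
Proof.
  intros [HN [Hcont [Hstr [Hpiece _]]]] [Hpos _].
  split.
  - intros beta.
    assert (Hex : exists alpha, is_argmax g beta alpha).
    { set (h := fun x => beta * x - g x).
      destruct (quad_neg (a 1%nat) (beta - b 1%nat) (g 0 - c 1%nat)) as [M1 [HM1 HM1']].
      { apply Hpos; lia. }
      destruct (quad_neg (a N) (beta - b N) (g 0 - c N)) as [M2 [HM2 HM2']].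
      { apply Hpos; lia. }
      set (L := - M1 - Rabs (tau 1%nat)).
      set (U := M2 + Rabs (tau (N-1)%nat)).
      assert (HLU : L <= U) by (unfold L, U; pose proof (Rabs_pos (tau 1%nat)); pose proof (Rabs_pos (tau (N-1)%nat)); lra).
      assert (Hc : forall y, L <= y <= U -> continuity_pt h y).
      { intros y _. unfold h.
        apply (continuity_pt_minus (fun x => beta * x) g).
        - apply (continuity_pt_scal (fun x => x)). apply derivable_continuous_pt, derivable_pt_id.
        - apply Hcont. }
      destruct (continuity_ab_maj h L U HLU Hc) as [Mx [HMx HMxr]].
      exists Mx. intros x. fold (h x). fold (h Mx).
      assert (H0 : h 0 <= h Mx). { apply HMx. unfold L, U. pose proof (Rabs_pos (tau 1%nat)); pose proof (Rabs_pos (tau (N-1)%nat)); lra. }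
      destruct (Rle_dec L x) as [HLx|HLx]; [destruct (Rle_dec x U) as [HxU|HxU]|].
      + apply HMx; lra.
      + assert (Hg : g x = quad (a N) (b N) (c N) x).
        { apply Hpiece; [lia|]. split; [|left; reflexivity].
          destruct (Nat.eq_dec N 1); [left; auto|right].
          pose proof (Rle_abs (tau (N-1)%nat)). unfold U in HxU. lra. }
        assert (Hm : M2 <= Rabs x). { unfold U in HxU. pose proof (Rabs_pos (tau (N-1)%nat)). rewrite Rabs_right; lra. }
        specialize (HM2' x Hm). unfold h. rewrite Hg. unfold h in H0. unfold quad in *.
        replace (beta * 0 - g 0) with (- g 0) in H0 by ring. lra.
      + assert (Hg : g x = quad (a 1%nat) (b 1%nat) (c 1%nat) x).
        { apply Hpiece; [lia|]. split; [left; reflexivity|].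
          destruct (Nat.eq_dec 1 N); [left; auto|right].
          pose proof (Rle_abs (- tau 1%nat)). rewrite Rabs_Ropp in H. unfold L in HLx. lra. }
        assert (Hm : M1 <= Rabs x). { unfold L in HLx. pose proof (Rabs_pos (tau 1%nat)). rewrite Rabs_left; lra. }
        specialize (HM1' x Hm). unfold h. rewrite Hg. unfold h in H0. unfold quad in *.
        replace (beta * 0 - g 0) with (- g 0) in H0 by ring. lra. }
    destruct Hex as [alpha Ha].
    destruct (cover N tau alpha HN) as [k [Hk Hpk]].
    destruct (min_nat_ex (index_set g N tau beta)) as [n [Hn Hmin]].
    { exists k. split; auto. exists alpha; auto. }
    exists n. split; auto.
  - intros beta1 beta2 k1 k2 Hb [[Hk1 [al1 [Ha1 Hp1]]] Hm1] [[Hk2 [al2 [Ha2 Hp2]]] Hm2].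
    destruct (le_lt_dec k1 k2) as [Hle|Hlt]; [exact Hle|].
    apply Hm1. destruct (Req_dec beta1 beta2) as [Heq|Hne].
    + subst. split; auto. exists al2; auto.
    + split; auto.
      exists al1. split; auto.
        assert (Hal : al1 <= al2).
        { specialize (Ha1 al2). specialize (Ha2 al1). nra. }
        destruct Hp1 as [[?|Hl1] _]; [lia|].
        destruct Hp2 as [Hl2 [?|Hu2]]; [lia|].
        split; [|right; lra].
        destruct (Nat.eq_dec k2 1); [left; auto|right].
        assert (tau (k2-1)%nat <= tau (k2 - 1 + (k1 - k2))%nat) by (apply (tau_mono N tau Hstr); lia).
        replace (k2 - 1 + (k1 - k2))%nat with (k1 - 1)%nat in H by lia. lra.
Qed.
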